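(* Let $F:\mathbb{Z}\to\mathbb{C}$ be any function and $n\in\mathbb{Z}$. For $m=1,2,3,\dots$ define $$J_m(n,F):=\sum_{i\in\mathbb{Z}}F(i)F(i+n)F(i+2n)\cdots F\big(i+n(m-1)\big)\,:\psi_i\psi^\dagger_{i+nm}:.$$ Then $[J_m(n,F),J_{m'}(n,F)]=0$ for all $m,m'\ge1$.
   Context: Let $\psi_i,\psi^\dagger_i$ ($i\in\mathbb{Z}$) be charged free fermions, i.e. operators on the fermionic Fock space $\mathcal{F}$ satisfying $[\psi_i,\psi_j]_+=[\psi^\dagger_i,\psi^\dagger_j]_+=0$ and $[\psi_i,\psi^\dagger_j]_+=\delta_{ij}$. The space $\mathcal{F}$ is spanned by the vectors obtained from the vacuum $|0\rangle$ by applying finitely many $\psi_i,\psi^\dagger_i$; the vacuum satisfies $\psi^\dagger_i|0\rangle=0$ and $\psi_{-i-1}|0\rangle=0$ for $i\ge0$, and the dual vacuum satisfies $\langle0|\psi_i=0$, $\langle0|\psi^\dagger_{-i-1}=0$ for $i\ge0$, $\langle0|0\rangle=1$. Normal ordering: $:\psi_i\psi^\dagger_j:=\psi_i\psi^\dagger_j-\langle0|\psi_i\psi^\dagger_j|0\rangle$. The infinite sums act on each vector of $\mathcal F$ through finitely many nonzero terms. *)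

(* Defs.v *)
From HB Require Import structures.
From mathcomp Require Import all_boot all_order all_algebra.
From mathcomp Require Import finmap.
From mathcomp Require Import complex.
From mathcomp Require Import boolp classical_sets fsbigop.
From mathcomp Require Import Rstruct.

Set Implicit Arguments.
Unset Strict Implicit.
Unset Printing Implicit Defensive.
Import Order.TTheory GRing.Theory Num.Theory.

Local Open Scope fset_scope.
Local Open Scope ring_scope.

Definition C : Type := complex Rdefinitions.R.

(** A basis vector |S> of the Fock space is
    indexed by a subset S of Z with S (symmetric difference) Z_{<0} finite.
    We encode S by the finite set D = S (symmetric difference) Z_{<0}; this is a
    bijection between such S and finite sets of integers.  The vacuum |0>
    corresponds to S = Z_{<0}, i.e. D = fset0. *)
Definition state := {fset int}.

Definition occ (D : state) (j : int) : bool := (j < 0) != (j \in D).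

Definition toggle (D : state) (j : int) : state :=
  if j \in D then D `\ j else j |` D.

(** nabove D i = #{ j in S | j > i }.  Every occupied j > i is either a
    nonnegative element of D or a negative integer in (i, 0), which lies in
    [-|i|, -1]; so counting over this finite list is exact. *)
Definition nabove (D : state) (i : int) : nat :=
  count (fun j => (i < j) && occ D j)
        (undup (enum_fset D ++ [seq - (k.+1)%:Z | k <- iota 0 `|i|%N])).

Definition vec := state -> C.

Definition in_fock (v : vec) : Prop :=
  exists s : seq state, forall S, v S != 0 -> S \in s.

Definition vac : vec := fun S => if S == fset0 then 1 else 0.
Definition bra0 (w : vec) : C := w fset0.

(** Fermions (Jordan-Wigner signs):
      psi_i  |S> = (-1)^#{j in S, j > i} |S u {i}>   if i notin S, else 0;
      psid_i |S> = (-1)^#{j in S, j > i} |S \ {i}>   if i in S,    else 0;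
    written here as their action on coefficient functions, extended
    linearly. *)
Definition psi (i : int) (v : vec) : vec := fun T =>
  if occ T i then (-1) ^+ nabove (toggle T i) i * v (toggle T i) else 0.

Definition psid (i : int) (v : vec) : vec := fun T =>
  if ~~ occ T i then (-1) ^+ nabove (toggle T i) i * v (toggle T i) else 0.

Definition nord (i j : int) (v : vec) : vec := fun T =>
  psi i (psid j v) T - bra0 (psi i (psid j vac)) * v T.

(** J_m(n,F) = sum_{i in Z} F(i)F(i+n)...F(i+n(m-1)) :psi_i psid_{i+nm}:,
    the infinite sum being taken componentwise as a finitely supported sum
    (fsbigop: sum over the finite support, which is finite here). *)
Definition Jop (n : int) (F : int -> C) (m : nat) (v : vec) : vec := fun T =>
  \sum_(i \in [set: int])
     (\prod_(k < m) F (i + n * k%:Z)) * nord i (i + n * m%:Z) v T.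

(* Main.v *)
Require Import Defs.
From HB Require Import structures.
From mathcomp Require Import all_boot all_order all_algebra.
From mathcomp Require Import finmap complex boolp classical_sets fsbigop Rstruct.
From mathcomp Require Import zify ring lra.
Import Order.TTheory GRing.Theory Num.Theory.
Local Open Scope ring_scope.

Lemma mem_toggle (D : state) j x : (x \in toggle D j) = (x == j) (+) (x \in D).
Proof.
rewrite /toggle; case: ifP => hj.
  rewrite in_fsetD1; case: eqP => [->|] //=; by rewrite hj.
rewrite in_fset1U; case: eqP => [->|] //=; by rewrite hj.
Qed.

Lemma occ_toggle D j x : occ (toggle D j) x = if x == j then ~~ occ D j else occ D x.
Proof.
rewrite /occ mem_toggle; have [->|hxj] := eqVneq x j; rewrite ?eqxx /=.
  by case: (j < 0); case: (j \in D).
by [].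
Qed.

Lemma toggleK D j : toggle (toggle D j) j = D.
Proof. apply/fsetP => x; rewrite !mem_toggle; by case: (x == j); case: (x \in D). Qed.

Lemma toggleC D a b : toggle (toggle D a) b = toggle (toggle D b) a.
Proof. apply/fsetP => x; rewrite !mem_toggle; by case: (x == a); case: (x == b); case: (x \in D). Qed.

Lemma count_uniq_eq (T : eqType) (P : pred T) l1 l2 : uniq l1 -> uniq l2 ->
  (forall x, P x -> x \in l1) -> (forall x, P x -> x \in l2) -> count P l1 = count P l2.
Proof.
move=> u1 u2 h1 h2; rewrite -!size_filter; apply: perm_size.
apply: uniq_perm; rewrite ?filter_uniq // => x; rewrite !mem_filter.
by case Px: (P x) => //=; rewrite h1 ?h2.
Qed.

Definition negs (i : int) := [seq - (k.+1)%:Z | k <- iota 0 `|i|%N].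

Lemma negs_mem (i j : int) : i < j -> j < 0 -> j \in negs i.
Proof.
move=> h1 h2; apply/mapP; exists (absz j).-1.
  rewrite mem_iota /=; lia.
lia.
Qed.

Lemma nabove_count D i L : uniq L -> (forall x, (i < x) && occ D x -> x \in L) ->
  nabove D i = count (fun x => (i < x) && occ D x) L.
Proof.
move=> uL hL; rewrite /nabove; apply: count_uniq_eq => //; first exact: undup_uniq.
move=> x /andP [hix hx]; rewrite mem_undup mem_cat.
case hxD: (x \in D); first by [].
apply/orP; right; apply: negs_mem => //.
by move: hx; rewrite /occ hxD; case: (x < 0).
Qed.

Lemma nabove_toggle D j i : odd (nabove (toggle D j) i) = odd (nabove D i) (+) (i < j).
Proof.
set L := undup (j :: enum_fset D ++ negs i).
have uL : uniq L by exact: undup_uniq.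
have memL : forall x, (i < x) && occ D x -> x \in L.
  move=> x /andP [hix hx]; rewrite mem_undup inE mem_cat.
  case hxD: (x \in D); first by rewrite orbT.
  apply/orP; right; apply/orP; right; apply: negs_mem => //.
  by move: hx; rewrite /occ hxD; case: (x < 0).
have jL : j \in L by rewrite mem_undup inE eqxx.
rewrite (@nabove_count D i L uL memL) (@nabove_count (toggle D j) i L uL); last first.
  move=> x /andP [hix]; rewrite occ_toggle; have [->|hxj] := eqVneq x j => // hx.
  by apply: memL; rewrite hix hx.
have pL := perm_to_rem jL.
move/permP: pL => pL; rewrite !pL /= occ_toggle eqxx.
have -> : count (fun x => (i < x) && occ (toggle D j) x) (rem j L) =
          count (fun x => (i < x) && occ D x) (rem j L).
  apply: eq_in_count => x; rewrite (mem_rem_uniq _ uL) inE => /andP [hxj _].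
  by rewrite occ_toggle (negbTE hxj).
rewrite !oddD; case: (i < j); case: (occ D j) => /=; by case: (odd _).

Qed.

Definition sg (D : state) (i : int) : C := (-1) ^+ nabove D i.

Lemma sg_toggle D j i : sg (toggle D j) i = (if i < j then -1 else 1) * sg D i.
Proof.
rewrite /sg -signr_odd nabove_toggle signr_addb signr_odd.
by case: (i < j) => /=; rewrite ?expr1 ?expr0 mulrC.
Qed.

Lemma sg_toggle_same D i : sg (toggle D i) i = sg D i.
Proof. by rewrite sg_toggle ltxx mul1r. Qed.

Lemma sg_sq D i : sg D i * sg D i = 1.
Proof. by rewrite /sg -signr_odd; case: (odd _); rewrite ?expr1 ?expr0 ?mulrNN ?mulr1. Qed.

Lemma psiE i v T : psi i v T = if occ T i then sg (toggle T i) i * v (toggle T i) else 0.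
Proof. by []. Qed.
Lemma psidE i v T : psid i v T = if ~~ occ T i then sg (toggle T i) i * v (toggle T i) else 0.
Proof. by []. Qed.

Lemma ltNeq (a b : int) : a != b -> (b < a) = ~~ (a < b).
Proof. move=> h; rewrite ltNge le_eqVlt (negbTE h) //. Qed.

Lemma CAR_A a b v T : psi a (psid b v) T + psid b (psi a v) T = (a == b)%:R * v T.
Proof.
rewrite !psiE !psidE !psiE.
have [<-|hab] := eqVneq a b.
  rewrite !occ_toggle eqxx toggleK sg_toggle_same mul1r.
  case: (occ T a) => /=; rewrite ?mul0r ?mulr0 ?addr0 ?add0r mulrA sg_sq mul1r //.
rewrite mul0r !occ_toggle (negbTE hab) eq_sym (negbTE hab).
rewrite (toggleC T a b) !sg_toggle !ltxx (ltNeq _ _ hab).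
case: (occ T a); case: (occ T b) => /=; rewrite ?mulr0 ?addr0 ?add0r //.
case: (a < b) => /=; rewrite ?mulN1r ?mul1r; ring.
Qed.

Lemma CAR_B a c v T : psi a (psi c v) T = - psi c (psi a v) T.
Proof.
rewrite !psiE.
have [<-|hac] := eqVneq a c.
  rewrite !occ_toggle eqxx; case: (occ T a) => /=; by rewrite ?mulr0 ?oppr0.
rewrite !occ_toggle (negbTE hac) eq_sym (negbTE hac).
rewrite (toggleC T a c) !sg_toggle !ltxx (ltNeq _ _ hac).
case: (occ T a); case: (occ T c) => /=; rewrite ?mulr0 ?oppr0 //.
case: (a < c) => /=; rewrite ?mulN1r ?mul1r; ring.
Qed.

Lemma CAR_C a c v T : psid a (psid c v) T = - psid c (psid a v) T.
Proof.
rewrite !psidE.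
have [<-|hac] := eqVneq a c.
  rewrite !occ_toggle eqxx; case: (occ T a) => /=; by rewrite ?mulr0 ?oppr0.
rewrite !occ_toggle (negbTE hac) eq_sym (negbTE hac).
rewrite (toggleC T a c) !sg_toggle !ltxx (ltNeq _ _ hac).
case: (occ T a); case: (occ T c) => /=; rewrite ?mulr0 ?oppr0 //.
case: (a < c) => /=; rewrite ?mulN1r ?mul1r; ring.
Qed.

Lemma psi_comb a (x y : C) u w T :
  psi a (fun S => x * u S + y * w S) T = x * psi a u T + y * psi a w T.
Proof. rewrite !psiE; case: (occ T a); ring. Qed.
Lemma psid_comb a (x y : C) u w T :
  psid a (fun S => x * u S + y * w S) T = x * psid a u T + y * psid a w T.
Proof. rewrite !psidE; case: (~~ occ T a); ring. Qed.

Lemma psi_ext a u w : (forall S, u S = w S) -> psi a u = psi a w.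
Proof. by move=> h; have -> : u = w by apply: funext. Qed.
Lemma psid_ext a u w : (forall S, u S = w S) -> psid a u = psid a w.
Proof. by move=> h; have -> : u = w by apply: funext. Qed.

Lemma comm4 a b c d v T :
  psi a (psid b (psi c (psid d v))) T - psi c (psid d (psi a (psid b v))) T =
  (b == c)%:R * psi a (psid d v) T - (a == d)%:R * psi c (psid b v) T.
Proof.
set u := psid d v.
have E1 : psid b (psi c u) = fun S => (c == b)%:R * u S + (-1) * psi c (psid b u) S.
  apply: funext => S; have := CAR_A c b u S; move=> h; rewrite -h; ring.
rewrite E1 psi_comb.
have E2 : psid b u = fun S => (-1) * psid d (psid b v) S + 0 * v S.
  apply: funext => S; rewrite /u CAR_C; ring.
rewrite CAR_B E2.
have E3 : psi a (fun S => (-1) * psid d (psid b v) S + 0 * v S) =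
  fun S => (- (a == d)%:R) * psid b v S + 1 * psid d (psi a (psid b v)) S.
  apply: funext => S; rewrite psi_comb; have := CAR_A a d (psid b v) S => h.
  have -> : psi a (psid d (psid b v)) S = (a == d)%:R * psid b v S - psid d (psi a (psid b v)) S.
    rewrite -h; ring.
  ring.
rewrite E3 psi_comb (eq_sym c b) /u; ring.
Qed.

Definition win (N : nat) : seq int := [seq x%:Z - N%:Z | x <- iota 0 (N.*2).+1].
Definition bnd (T : state) (R : nat) := forall x, x \in T -> -(R%:Z) <= x <= R%:Z.

Lemma mem_win N i : (i \in win N) = (-(N%:Z) <= i <= N%:Z).
Proof.
apply/mapP/idP.
  move=> [x]; rewrite mem_iota => /andP [_ hx] ->; apply/andP; split; lia.
move=> /andP [h1 h2]; exists (absz (i + N%:Z)).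
  rewrite mem_iota; apply/andP; split; lia.
lia.
Qed.

Lemma uniq_win N : uniq (win N).
Proof.
rewrite map_inj_uniq ?iota_uniq // => x y h; lia.
Qed.

Lemma bnd_ex T : exists R, bnd T R.
Proof.
have [M hM] : exists M, forall x, x \in T -> (absz x <= M)%N.
  exists (\max_(x <- enum_fset T) absz x) => x hx.
  exact: (@leq_bigmax_seq _ (enum_fset T) xpredT absz x hx erefl).
exists M => x /hM; lia.
Qed.

Lemma fsumT (f : int -> C) r : uniq r -> (forall i, i \notin r -> f i = 0) ->
  \sum_(i \in [set: int]) f i = \sum_(i <- r) f i.
Proof.
move=> ur h; rewrite (fsbigE r) //.
  by apply: eq_bigl => i; rewrite in_setT.
by move=> i _; apply: h.
Qed.

Definition Pc (T : state) (i j : int) : C :=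
  if occ T i && ~~ occ (toggle T i) j then sg (toggle T i) i * sg (toggle (toggle T i) j) j else 0.

Lemma psipsid i j w T : psi i (psid j w) T = Pc T i j * w (toggle (toggle T i) j).
Proof.
rewrite psiE psidE /Pc; case: (occ T i) => /=; last by rewrite mul0r.
case: (~~ occ (toggle T i) j) => /=; ring.
Qed.

Lemma Pc_same T i : Pc T i i = (occ T i)%:R.
Proof.
rewrite /Pc occ_toggle eqxx negbK andbb toggleK sg_toggle_same mulrC sg_sq.
by case: (occ T i).
Qed.

Lemma occ0 i : occ fset0 i = (i < 0).
Proof. by rewrite /occ in_fset0; case: (i < 0). Qed.

Lemma cst_val i j : bra0 (psi i (psid j vac)) = ((i == j) && (i < 0))%:R.
Proof.
rewrite /bra0 psipsid /vac.
have [<-|hij] := eqVneq i j.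
  by rewrite toggleK eqxx Pc_same occ0 mulr1.
have -> : (toggle (toggle fset0 i) j == fset0) = false.
  apply/negbTE/negP => /eqP h.
  have : i \in toggle (toggle (fset0 : state) i) j by rewrite !mem_toggle eqxx (negbTE hij) in_fset0.
  by rewrite h in_fset0.
by rewrite mulr0.
Qed.

Lemma nordE i j w T :
  nord i j w T = Pc T i j * w (toggle (toggle T i) j) - ((i == j) && (i < 0))%:R * w T.
Proof. by rewrite /nord psipsid cst_val. Qed.

Lemma Pc_nz T i j : Pc T i j != 0 -> ((i == j) && occ T i) || (occ T i && ~~ occ T j).
Proof.
have [<-|hij] := eqVneq i j.
  rewrite Pc_same /=; case: (occ T i) => /=; rewrite ?eqxx // => _; rewrite eqxx.
rewrite /Pc occ_toggle [j == i]eq_sym (negbTE hij) /=.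
by case: (occ T i && ~~ occ T j) => //; rewrite eqxx.
Qed.

Lemma occ_cases T i j : occ T i -> ~~ occ T j -> (i \in T) || (j \in T) || ((i < 0) && (0 <= j)).
Proof.
rewrite /occ; case: (i \in T); case: (j \in T) => //=; rewrite ?orbT //.
rewrite /occ leNgt; case: (i \in T); case: (j \in T); case: (i < 0); case: (j < 0) => //=; rewrite ?orbT.
Qed.

Lemma nord_supp i j w T : nord i j w T != 0 -> (i \in T) || (j \in T) || ((i < 0) && (0 <= j)).
Proof.
rewrite nordE.
have [<-|hij] := eqVneq i j.
  rewrite toggleK Pc_same /=.
  case hiT: (i \in T) => //=.
  by rewrite /occ hiT; case: (i < 0); rewrite /= subrr eqxx.
rewrite /= mul0r subr0.
have [->|hP _] := eqVneq (Pc T i j) 0; first by rewrite mul0r eqxx.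
case/orP: (@Pc_nz T i j hP) => [/andP [/eqP h _]|/andP [h1 h2]]; first by move: hij; rewrite h eqxx.
exact: occ_cases.
Qed.

Lemma bnd_toggle T R R2 i : bnd T R -> (R <= R2)%N -> -(R2%:Z) <= i <= R2%:Z -> bnd (toggle T i) R2.
Proof.
move=> hb hR hi x; rewrite mem_toggle; have [-> //|_] := eqVneq x i.
by move=> /= /hb; lia.
Qed.

Lemma Jop_win (n : int) (F : int -> C) (m : nat) (w : vec) (T : state) (R N : nat) : bnd T R -> (R + absz (n * m%:Z)%R <= N)%N ->
  Jop n F m w T = \sum_(i <- win N) (\prod_(k < m) F (i + n * k%:Z)) * nord i (i + n * m%:Z) w T.
Proof.
move=> hb hN; rewrite /Jop (@fsumT _ (win N) (uniq_win N)) // => i; rewrite mem_win => hi.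
have [->|/nord_supp] := eqVneq (nord i (i + n * m%:Z) w T) 0; first by rewrite mulr0.
case/orP => [/orP [/hb|/hb] | /andP [h1 h2]]; lia.
Qed.

Definition cf (F : int -> C) (n : int) (m : nat) (i : int) : C := \prod_(k < m) F (i + n * k%:Z).

Lemma bnd_mono T R R' : bnd T R -> (R <= R')%N -> bnd T R'.
Proof. by move=> hb h x /hb; lia. Qed.

Lemma T2_bnd T R (i k : int) : bnd T R -> Pc T i (i + k) != 0 ->
  bnd (toggle (toggle T i) (i + k)) (R + absz k).
Proof.
move=> hb /Pc_nz /orP [/andP [/eqP h _]|/andP [h1 h2]].
  rewrite -h toggleK; apply: bnd_mono hb _; lia.
have hc := @occ_cases T _ _ h1 h2.
have hi : -((R + absz k)%N%:Z) <= i <= (R + absz k)%N%:Z.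
  by case/orP: hc => [/orP [/hb|/hb]|/andP [? ?]]; lia.
have hj : -((R + absz k)%N%:Z) <= i + k <= (R + absz k)%N%:Z.
  by case/orP: hc => [/orP [/hb|/hb]|/andP [? ?]]; lia.
apply: (@bnd_toggle _ (R + absz k)%N _ _ _ _ hj) => //; apply: (@bnd_toggle T R _ i hb _ hi); lia.
Qed.

Lemma expand (n : int) (F : int -> C) (m m' : nat) (v : vec) (T : state) (R N : nat) :
  bnd T R -> (R + absz (n * m%:Z)%R + absz (n * m'%:Z)%R <= N)%N ->
  Jop n F m (Jop n F m' v) T = \sum_(i <- win N) \sum_(i' <- win N)
     cf F n m i * cf F n m' i' * nord i (i + n * m%:Z) (nord i' (i' + n * m'%:Z) v) T.
Proof.
move=> hb hN.
rewrite (@Jop_win n F m _ T R N hb); last by lia.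
apply: eq_bigr => i _; rewrite nordE.
set j := i + n * m%:Z; set T2 := toggle (toggle T i) j.
set c := ((i == j) && (i < 0))%:R.
have E1 : Pc T i j * Jop n F m' v T2 =
   \sum_(i' <- win N) Pc T i j * (cf F n m' i' * nord i' (i' + n * m'%:Z) v T2).
  have [->|hP] := eqVneq (Pc T i j) 0.
    by rewrite mul0r big1 // => ? _; rewrite mul0r.
  have hb2 := @T2_bnd T R i (n * m%:Z) hb hP.
  by rewrite (@Jop_win n F m' v T2 _ N hb2) ?mulr_sumr //; lia.
have E2 : c * Jop n F m' v T =
   \sum_(i' <- win N) c * (cf F n m' i' * nord i' (i' + n * m'%:Z) v T).
  by rewrite (@Jop_win n F m' v T R N hb) ?mulr_sumr //; lia.
rewrite E1 E2 -sumrB mulr_sumr; apply: eq_bigr => i' _.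
rewrite [nord i j _ T]nordE -/T2 -/c /cf; ring.
Qed.

Lemma nord_fun i j w : nord i j w = fun S => psi i (psid j w) S - bra0 (psi i (psid j vac)) * w S.
Proof. by []. Qed.

Lemma pp_lin a b c d x v T :
  psi a (psid b (fun S => psi c (psid d v) S - x * v S)) T =
  psi a (psid b (psi c (psid d v))) T - x * psi a (psid b v) T.
Proof.
rewrite (@psid_ext b _ (fun S => 1 * psi c (psid d v) S + (- x) * v S)); last by move=> S; ring.
rewrite (@psi_ext a _ (fun S => 1 * psid b (psi c (psid d v)) S + (- x) * psid b v S)); last first.
  by move=> S; rewrite psid_comb.
rewrite psi_comb; ring.
Qed.

Lemma nord_comm i j i' j' v T :
  nord i j (nord i' j' v) T - nord i' j' (nord i j v) T =
  (j == i')%:R * psi i (psid j' v) T - (i == j')%:R * psi i' (psid j v) T.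
Proof.
rewrite [nord i j (nord i' j' v)]nord_fun [nord i' j' (nord i j v)]nord_fun /=.
rewrite [nord i' j' v]nord_fun [nord i j v]nord_fun !pp_lin.
have := comm4 i j i' j' v T; rewrite -/(nord i' j' v) -/(nord i j v) => h.
rewrite -h; ring.
Qed.

Lemma sum_delta (W : seq int) (x : int) (g : int -> C) : uniq W ->
  \sum_(y <- W) (x == y)%:R * g y = (x \in W)%:R * g x.
Proof.
elim: W => [|y W IH] /=; first by rewrite big_nil mul0r.
move=> /andP [hy uW]; rewrite big_cons IH // inE.
have [exy|hxy] := eqVneq x y.
  by rewrite exy (negbTE hy) /= mul1r mul0r addr0.
by rewrite /= mul0r add0r.
Qed.

Lemma cf_add F n m m' i : cf F n (m + m') i = cf F n m i * cf F n m' (i + n * m%:Z).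
Proof.
rewrite /cf big_split_ord /=; congr (_ * _); apply: eq_bigr => j _; congr F.
by rewrite /= PoszD mulrDr addrA.
Qed.

Lemma final_sum (W : seq int) (a b : int -> C) (G : int -> int -> C) (k k' : int) : uniq W ->
 \sum_(i <- W) \sum_(i' <- W) a i * b i' * ((i + k == i')%:R * G i (i' + k') - (i == i' + k')%:R * G i' (i + k))
 = \sum_(i <- W) ((i + k \in W)%:R * (a i * b (i + k) * G i (i + k + k'))
                 - (i + k' \in W)%:R * (a (i + k') * b i * G i (i + k' + k))).
Proof.
move=> uW.
have -> : \sum_(i <- W) \sum_(i' <- W) a i * b i' * ((i + k == i')%:R * G i (i' + k') - (i == i' + k')%:R * G i' (i + k))
  = \sum_(i <- W) \sum_(i' <- W) (i + k == i')%:R * (a i * b i' * G i (i' + k'))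
    - \sum_(i <- W) \sum_(i' <- W) (i == i' + k')%:R * (a i * b i' * G i' (i + k)).
  rewrite -sumrB; apply: eq_bigr => i _; rewrite -sumrB; apply: eq_bigr => i' _; ring.
rewrite [X in _ - X = _]exchange_big /= -sumrB; apply: eq_bigr => i _.
rewrite sum_delta //; congr (_ - _).
rewrite -(@sum_delta W (i + k') (fun j => a j * b i * G i (j + k))) //.
by apply: eq_bigr => j _; rewrite eq_sym.
Qed.

Theorem mainTheorem3 (n : int) (F : int -> C) (m m' : nat) :
  (0 < m)%N -> (0 < m')%N ->
  forall v : vec, in_fock v ->
    Jop n F m (Jop n F m' v) = Jop n F m' (Jop n F m v).
Proof.
move=> hm hm' v _; apply: funext => T.
have [R hb] := bnd_ex T.
have hs : (0 <= n * m%:Z /\ 0 <= n * m'%:Z) \/ (n * m%:Z <= 0 /\ n * m'%:Z <= 0).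
  have [h|h] := lerP 0 n; [left|right]; split; nia.
pose N := (R + absz (n * m%:Z)%R + absz (n * m'%:Z)%R)%N.
rewrite (@expand n F m m' v T R N hb) //.
rewrite (@expand n F m' m v T R N hb); last by rewrite /N; lia.
rewrite [in RHS]exchange_big /=.
apply/eqP; rewrite -subr_eq0 -sumrB; apply/eqP.
have step : forall i i',
  cf F n m i * cf F n m' i' * nord i (i + n * m%:Z) (nord i' (i' + n * m'%:Z) v) T -
  cf F n m' i' * cf F n m i * nord i' (i' + n * m'%:Z) (nord i (i + n * m%:Z) v) T =
  cf F n m i * cf F n m' i' * ((i + n * m%:Z == i')%:R * psi i (psid (i' + n * m'%:Z) v) T
     - (i == i' + n * m'%:Z)%:R * psi i' (psid (i + n * m%:Z) v) T).
  move=> i i'; rewrite -nord_comm; ring.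
under eq_bigr => i _ do rewrite -sumrB.
under eq_bigr => i _ do under eq_bigr => i' _ do rewrite step.
rewrite (@final_sum (win N) (cf F n m) (cf F n m') (fun x y => psi x (psid y v) T) (n * m%:Z) (n * m'%:Z)) ?uniq_win //.
rewrite big_seq big1 // => i hi.
rewrite [i + n * m'%:Z + n * m%:Z]addrAC.
have -> : cf F n m (i + n * m'%:Z) * cf F n m' i = cf F n m i * cf F n m' (i + n * m%:Z).
  by rewrite -cf_add addnC cf_add mulrC.
set G := psi i (psid _ v) T.
have [->|hG] := eqVneq G 0; first by rewrite !mulr0 subrr.
have [h1 h2] : (i + n * m%:Z \in win N) /\ (i + n * m'%:Z \in win N).
  move: hG; rewrite /G psipsid => hG.
  have hP : Pc T i (i + n * m%:Z + n * m'%:Z) != 0.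
    by apply: contraNneq hG => ->; rewrite mul0r.
  move: hi; rewrite !mem_win /N => hi.
  case/orP: (@Pc_nz T _ _ hP) => [/andP [/eqP h _] | /andP [o1 o2]].
    split; lia.
  case/orP: (@occ_cases T _ _ o1 o2) => [/orP [/hb|/hb]|/andP [? ?]]; split; lia.
by rewrite h1 h2 subrr.
Qed.
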